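(* Let $(\mathfrak{g},\theta)$ be a nilpotent symplectic Lie algebra over $\mathbb{R}$ and let $\nabla$ be the affine structure on $\mathfrak{g}$ associated to $\theta$, i.e. $\nabla(X,Y)$ is the unique vector with $\theta(\nabla(X,Y),Z)=-\theta(Y,[X,Z])$ for all $Z\in\mathfrak{g}$. Let $\widetilde{\mathfrak{g}}=\mathfrak{g}\oplus\mathbb{R}$ with bracket $[(X,\alpha),(Y,\lambda)]=([X,Y],\theta(X,Y))$. Let $\varphi$ be a bilinear form on $\mathfrak{g}$ with $\varphi(X,Y)-\varphi(Y,X)=\theta(X,Y)$, and let $\widetilde{\nabla}:\widetilde{\mathfrak{g}}\times\widetilde{\mathfrak{g}}\to\widetilde{\mathfrak{g}}$ be a bilinear map such that for all $X,Y\in\mathfrak{g}$, $\lambda\in\mathbb{R}$: $\widetilde{\nabla}((X,0),(Y,0))=(\nabla(X,Y),\varphi(X,Y))$ and $\widetilde{\nabla}((X,0),(0,\lambda))=\widetilde{\nabla}((0,\lambda),(X,0))$. Define, for $U,V,W\in\widetilde{\mathfrak{g}}$, $$C(U,V,W)=\widetilde{\nabla}(U,\widetilde{\nabla}(V,W))-\widetilde{\nabla}(V,\widetilde{\nabla}(U,W))-\widetilde{\nabla}([U,V],W).$$ If $C((X,0),(0,1),(Y,0))=0$ for all $X,Y\in\mathfrak{g}$, then $C((X,0),(Y,0),(0,1))=0$ for all $X,Y\in\mathfrak{g}$.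
   Context: A symplectic Lie algebra is a Lie algebra with a nondegenerate skew-symmetric bilinear form $\theta$ satisfying $\theta([X,Y],Z)+\theta([Y,Z],X)+\theta([Z,X],Y)=0$. An affine structure on a Lie algebra $\mathfrak{h}$ is a bilinear map $\nabla$ with $\nabla(X,Y)-\nabla(Y,X)=[X,Y]$ and $\nabla(X,\nabla(Y,Z))-\nabla(Y,\nabla(X,Z))=\nabla([X,Y],Z)$ for all $X,Y,Z$; the map $\nabla$ defined from $\theta$ in the claim is such a structure. *)

(* Defs.v *)
From HB Require Import structures.
From mathcomp Require Import all_boot all_order all_algebra.
From mathcomp Require Import reals.
Set Implicit Arguments. Unset Strict Implicit. Unset Printing Implicit Defensive.
Import Order.TTheory GRing.Theory Num.Theory.
Local Open Scope ring_scope.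

Section Defs.
Variable R : realType.

Definition bilin (V W : lmodType R) (f : V -> V -> W) : Prop :=
  (forall a x y z, f (a *: x + y) z = a *: f x z + f y z) /\
  (forall a x y z, f x (a *: y + z) = a *: f x y + f x z).

Definition is_lie_bracket (V : lmodType R) (br : V -> V -> V) : Prop :=
  [/\ bilin br, (forall x, br x x = 0) &
      (forall x y z, br x (br y z) + br y (br z x) + br z (br x y) = 0)].

Fixpoint itbr (V : lmodType R) (br : V -> V -> V) (x : V) (s : seq V) : V :=
  if s is y :: s' then br y (itbr br x s') else x.

(* nilpotent: the lower central series vanishes, i.e. all (k+1)-fold
   iterated brackets vanish for some k *)
Definition lie_nilpotent (V : lmodType R) (br : V -> V -> V) : Prop :=
  exists k : nat, forall (s : seq V) (x : V), size s = k -> itbr br x s = 0.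

Definition is_symplectic_form (V : lmodType R) (br : V -> V -> V)
  (theta : V -> V -> R^o) : Prop :=
  [/\ bilin theta, (forall x y, theta x y = - theta y x),
      (forall x, (forall y, theta x y = 0) -> x = 0) &
      (forall x y z, theta (br x y) z + theta (br y z) x + theta (br z x) y = 0)].

Definition ext_br (V : lmodType R) (br : V -> V -> V) (theta : V -> V -> R^o)
  (u v : (V * R^o)%type) : (V * R^o)%type :=
  (br u.1 v.1, theta u.1 v.1).

Definition curvC (V : lmodType R) (br : V -> V -> V) (theta : V -> V -> R^o)
  (tn : (V * R^o)%type -> (V * R^o)%type -> (V * R^o)%type)
  (u v w : (V * R^o)%type) : (V * R^o)%type :=
  tn u (tn v w) - tn v (tn u w) - tn (ext_br br theta u v) w.

End Defs.

(* Main.v *)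
Require Import Defs.
From HB Require Import structures.
From mathcomp Require Import all_boot all_order all_algebra.
From mathcomp Require Import reals.
From mathcomp Require Import ring.
Import GRing.Theory Num.Theory.
Local Open Scope ring_scope.

Lemma dbl0 (M : zmodType) (x : M) : x = x + x -> x = 0.
Proof. by move=> h; have := subrr x; rewrite {1}h addrK. Qed.

Theorem mainTheorem3 (R : realType) (V : vectType R)
  (br : V -> V -> V) (theta : V -> V -> R^o) (nabla : V -> V -> V)
  (phi : V -> V -> R^o)
  (tn : (V * R^o)%type -> (V * R^o)%type -> (V * R^o)%type) :
  is_lie_bracket br ->
  lie_nilpotent br ->
  is_symplectic_form br theta ->
  (forall X Y Z, theta (nabla X Y) Z = - theta Y (br X Z)) ->
  bilin phi ->
  (forall X Y, phi X Y - phi Y X = theta X Y) ->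
  bilin tn ->
  (forall X Y : V, tn (X, 0) (Y, 0) = (nabla X Y, phi X Y)) ->
  (forall (X : V) (l : R), tn (X, 0) (0, l) = tn (0, l) (X, 0)) ->
  (forall X Y : V, curvC br theta tn (X, 0) (0, 1) (Y, 0) = 0) ->
  forall X Y : V, curvC br theta tn (X, 0) (Y, 0) (0, 1) = 0.
Proof.
move=> [[brL brR] brxx jac] _ [[thL thR] thA thN thC] hnab _ hphi [tnL tnR]
  htn hcom hC X Y.
have th0l : forall z, theta 0 z = 0.
  move=> z; have := thL 1 0 0 z; rewrite !scale1r addr0 => h.
  exact: dbl0.
have thDl : forall x y z, theta (x - y) z = theta x z - theta y z.
  move=> x y z; have := thL (-1) y x z; rewrite scaleN1r addrC => ->.
  by rewrite scaleN1r addrC.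
have br0l : forall z, br 0 z = 0.
  move=> z; have := brL 1 0 0 z; rewrite !scale1r addr0 => h.
  exact: dbl0.
have brAC : forall x y, br x y = - br y x.
  move=> x y; have := brxx (x + y).
  have := brL 1 x y (x + y); rewrite !scale1r => ->.
  have -> : br x (x + y) = br x x + br x y by have := brR 1 x x y; rewrite !scale1r.
  have -> : br y (x + y) = br y x + br y y by have := brR 1 y x y; rewrite !scale1r.
  rewrite !brxx add0r addr0 => /eqP; rewrite addr_eq0 => /eqP ->.
  by [].
have tors : forall x y, nabla x y - nabla y x = br x y.
  move=> x y; apply/eqP; rewrite -subr_eq0; apply/eqP; apply: thN => z.
  rewrite !thDl !hnab.
  have thNl : forall a b, theta (- a) b = - theta a b.
    by move=> a b; have := thDl 0 a b; rewrite sub0r th0l sub0r.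
  rewrite (thA y) (thA x (br y z)) (brAC x z) thNl -oppr0 -(thC x y z).
  rewrite !opprK; set p := theta _ _; set q := theta _ _; set r := theta _ _.
  ring.
set e : (V * R^o)%type := (0, 1).
have br0r : forall x, br x 0 = 0.
  move=> x; have := brR 1 x 0 0; rewrite !scale1r addr0 => h; exact: dbl0.
have th0r : forall x, theta x 0 = 0.
  move=> x; have := thR 1 x 0 0; rewrite !scale1r addr0 => h; exact: dbl0.
have tn00 : forall w, tn (0, 0) w = 0.
  move=> w; have := tnL 1 0 0 w; rewrite !scale1r addr0 => h; exact: dbl0.
have pdec : forall (Z : V) (m : R), ((Z, m) : (V * R^o)%type) = m *: e + (Z, 0).
  move=> Z m; apply: injective_projections => /=.
    by rewrite scaler0 add0r.
  by rewrite addr0 /GRing.scale /= mulr1.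
have decR : forall u Z m, tn u (Z, m) = m *: tn u e + tn u (Z, 0).
  by move=> u Z m; rewrite pdec tnR.
have decL : forall Z m w, tn (Z, m) w = m *: tn e w + tn (Z, 0) w.
  by move=> Z m w; rewrite pdec tnL.
have PB : forall a b, tn (a - b, 0) e = tn (a, 0) e - tn (b, 0) e.
  move=> a b; have -> : ((a - b, 0) : (V * R^o)%type) = (-1) *: (b, 0) + (a, 0).
    apply: injective_projections => /=.
      by rewrite scaleN1r addrC.
    by rewrite addr0 /GRing.scale /= mulr0.
  by rewrite tnL scaleN1r addrC.
have H : forall X Y, tn (X, 0) (tn (Y, 0) e) = phi X Y *: tn e e + tn (nabla X Y, 0) e.
  move=> X0 Y0; have := hC X0 Y0.
  rewrite /curvC /ext_br /= br0r th0r tn00 subr0 -hcom htn decR.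
  by move/eqP; rewrite subr_eq0 => /eqP ->; rewrite -hcom.
rewrite /curvC /ext_br /= (decL (br X Y)) !H -tors PB -hphi scalerBl.
by rewrite opprD addrACA subrr.
Qed.
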